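(* Let $|\phi_{\mathrm w}(\theta)\rangle$ be the 2-d Ising whip state on $\Lambda_L$ ($L\ge2$). Let $\mathcal B$ be the set of sites of $\Lambda_L$ having at least one coordinate in $\{0,L-1\}$, excluding $(0,0)$ and $(L-1,L-1)$, and $\hat T=\prod_{i\in\mathcal B}Z_i$. Then for all $\theta$ there is a phase $\phi\in\mathbb R$ with $$|\phi_{\mathrm w}(\theta+\pi)\rangle=e^{\mathrm i\phi}\,\hat T\,|\phi_{\mathrm w}(\theta)\rangle.$$ Moreover, with $\partial X=\sum_{i\in\mathcal B'}X_i$, $\mathcal B'=\{(L-1,b):0\le b\le L-2\}\cup\{(a,L-1):0\le a\le L-2\}\subseteq\mathcal B$, one has $\hat T\,\partial X=-\partial X\,\hat T$; in particular $\langle\partial X\rangle_{\theta+\pi}=-\langle\partial X\rangle_\theta$ while $\langle Z_iZ_j\rangle_{\theta+\pi}=\langle Z_iZ_j\rangle_\theta$ for all sites $i,j$.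
   Context: 2-d Ising whip circuit: for $L\ge2$, $\Lambda_L=\{0,\dots,L-1\}^2$, one qubit per site, $N=L^2$. Directed edges $(a,b)\to(a+1,b)$ and $(a,b)\to(a,b+1)$ whenever the target lies in $\Lambda_L$. $\deg^-(v)$ is the number of incoming edges of $v$. For each edge $u\to v$ let $G_{u\to v}(\theta)=\exp(-\mathrm i\,\theta\,Z_uY_v/\deg^-(v))$ with Pauli matrices $X,Y,Z$. The whip state is $|\phi_{\mathrm w}(\theta)\rangle=\prod G_{u\to v}(\theta)|+\rangle^{\otimes N}$, $|+\rangle=(|0\rangle+|1\rangle)/\sqrt2$, with gates applied in order of increasing $a+b$ of the target $v=(a,b)$. $\langle A\rangle_\theta=\langle\phi_{\mathrm w}(\theta)|A|\phi_{\mathrm w}(\theta)\rangle$. *)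

(* Defs.v *)
From HB Require Import structures.
From mathcomp Require Import all_boot all_order all_algebra.
From mathcomp Require Import complex.
From mathcomp Require Import reals trigo.

Set Implicit Arguments.
Unset Strict Implicit.
Unset Printing Implicit Defensive.

Import Order.TTheory GRing.Theory Num.Theory.
Local Open Scope ring_scope.

Section Whip.
Variable R : realType.
Variable L : nat.

Local Notation C := (complex R).

Definition iC : C := Complex 0 1.
Definition rC (x : R) : C := Complex x 0.
Definition cconj (z : C) : C := let: Complex a b := z in Complex a (- b).

Definition site := ('I_L * 'I_L)%type.
(* computational basis configurations: bit x_i for each site i
   (false = |0>, true = |1>) *)
Definition config := {ffun site -> bool}.
Definition state := config -> C.
Definition op := state -> state.

Definition flip (i : site) (x : config) : config :=
  [ffun j => if j == i then ~~ x j else x j].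

(* Pauli operators acting on qubit i (tensored with identity elsewhere):
   X|0>=|1>, X|1>=|0>;  Y|0>= i|1>, Y|1> = -i|0>;  Z|0>=|0>, Z|1>=-|1>. *)
Definition pauliX (i : site) : op := fun psi x => psi (flip i x).
Definition pauliY (i : site) : op :=
  fun psi x => (if x i then iC else - iC) * psi (flip i x).
Definition pauliZ (i : site) : op :=
  fun psi x => (if x i then -1 else 1) * psi x.

Definition addop (A B : op) : op := fun psi x => A psi x + B psi x.
Definition zeroop : op := fun _ _ => 0.

Definition edge (u v : site) : bool :=
  ((v.1 : nat) == u.1.+1) && ((v.2 : nat) == u.2)
  || ((v.1 : nat) == u.1) && ((v.2 : nat) == u.2.+1).

Definition indeg (v : site) : nat := #|[pred u | edge u v]|.

(* G_{u->v}(theta) = exp(-i theta Z_u Y_v / deg^-(v)).  Since (Z_u Y_v)^2 = 1,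
   this exponential equals cos(t) 1 - i sin(t) Z_u Y_v with t = theta/deg^-(v). *)
Definition gate (theta : R) (u v : site) : op :=
  fun psi x =>
    let t := theta / (indeg v)%:R in
    rC (cos t) * psi x - iC * rC (sin t) * pauliZ u (pauliY v psi) x.

(* targets sorted by increasing a+b; edges listed in the order of
   application (gates of the same level a+b commute, so ties are immaterial) *)
Definition level (v : site) : nat := v.1 + v.2.
Definition sorted_sites : seq site :=
  sort (fun v w => leq (level v) (level w)) (enum {: site}).
Definition edge_list : seq (site * site) :=
  flatten [seq [seq (u, v) | u <- enum {: site} & edge u v]
          | v <- sorted_sites].

(* |+>^{\otimes N}: every amplitude equals (1/sqrt 2)^N, N = L^2 *)
Definition plus_state : state := fun _ => rC ((Num.sqrt 2)^-1 ^+ (L * L)).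

Definition whip (theta : R) : state :=
  foldl (fun psi e => gate theta e.1 e.2 psi) plus_state edge_list.

Definition expect (A : op) (psi : state) : C :=
  \sum_(x : config) cconj (psi x) * A psi x.

Definition inB (i : site) : bool :=
  [|| (i.1 : nat) == 0, (i.1 : nat) == L.-1, (i.2 : nat) == 0
    | (i.2 : nat) == L.-1]
  && ~~ (((i.1 : nat) == 0) && ((i.2 : nat) == 0))
  && ~~ (((i.1 : nat) == L.-1) && ((i.2 : nat) == L.-1)).

Definition inB' (i : site) : bool :=
  ((i.1 : nat) == L.-1) && ((i.2 : nat) <= L - 2)%N
  || ((i.2 : nat) == L.-1) && ((i.1 : nat) <= L - 2)%N.

(* T = prod_{i in B} Z_i (Z's commute, so the order is immaterial) *)
Definition Top : op :=
  foldr (fun i A => fun psi => pauliZ i (A psi)) id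
        [seq i <- enum {: site} | inB i].

Definition dX : op :=
  foldr (fun i A => addop (pauliX i) A) zeroop
        [seq i <- enum {: site} | inB' i].

Definition ZZ (i j : site) : op := fun psi => pauliZ i (pauliZ j psi).

Definition expi (phi : R) : C := Complex (cos phi) (sin phi).

End Whip.

(* Main.v *)
Require Import Defs.
From HB Require Import structures.
From mathcomp Require Import all_boot all_order all_algebra.
From mathcomp Require Import complex.
From mathcomp Require Import reals trigo.
From mathcomp Require Import zify ring lra.
From Stdlib Require Import FunctionalExtensionality.
Import Order.TTheory GRing.Theory Num.Theory.
Local Open Scope ring_scope.
Set Implicit Arguments. Unset Strict Implicit.

Section S.
Variable R : realType.
Variable L : nat.
Local Notation C := (R[i]).
Local Notation site := (site L).
Local Notation config := (config L).
Local Notation state := (state R L).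

Definition sz (u : site) (x : config) : C := if x u then -1 else 1.
Definition sxx (v : site) (x : config) : C := if x v then 1 else -1.

Lemma iCiC : iC R * iC R = -1.
Proof. rewrite /iC. apply/eqP; rewrite eq_complex /=. apply/andP; split; apply/eqP; ring. Qed.

Lemma rCN (a : R) : rC a = - rC a :> C -> a = 0.
Proof. Abort.

Lemma gateE theta u v (psi : state) x :
  gate theta u v psi x = rC (cos (theta / (indeg v)%:R)) * psi x
    + rC (sin (theta / (indeg v)%:R)) * (sz u x * sxx v x) * psi (flip v x).
Proof.
rewrite /gate /pauliZ /pauliY /sz /sxx.
set c := rC _; set s := rC _.
have h := iCiC.
case: (x u); case: (x v).
- have -> : iC R * s * (-1 * (iC R * psi (flip v x))) = - (iC R * iC R) * (s * psi (flip v x)) by ring.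
  rewrite h; ring.
- have -> : iC R * s * (-1 * (- iC R * psi (flip v x))) = (iC R * iC R) * (s * psi (flip v x)) by ring.
  rewrite h; ring.
- have -> : iC R * s * (1 * (iC R * psi (flip v x))) = (iC R * iC R) * (s * psi (flip v x)) by ring.
  rewrite h; ring.
- have -> : iC R * s * (1 * (- iC R * psi (flip v x))) = - (iC R * iC R) * (s * psi (flip v x)) by ring.
  rewrite h; ring.
Qed.

Lemma flipK i (x : config) : flip i (flip i x) = x.
Proof. by apply/ffunP => j; rewrite !ffunE; case: (j == i) => //; rewrite negbK. Qed.

Lemma flip_ne i j (x : config) : j != i -> flip i x j = x j.
Proof. by move=> h; rewrite ffunE (negbTE h). Qed.

Lemma flip_eq i (x : config) : flip i x i = ~~ x i.
Proof. by rewrite ffunE eqxx. Qed.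

Definition sg (A : site -> bool) (x : config) : C :=
  \prod_(i : site) (if A i && x i then -1 else 1).

Lemma sg_flip A i x : sg A (flip i x) = (if A i then -1 else 1) * sg A x.
Proof.
rewrite /sg (bigD1 i) //= [X in _ = _ * X](bigD1 i) //= flip_eq.
rewrite (eq_bigr (fun j => if A j && x j then -1 else 1)); last first.
  by move=> j hj; rewrite flip_ne.
by case: (A i); case: (x i) => /=; ring.
Qed.

Lemma sgX A B x : sg (fun w => A w (+) B w) x = sg A x * sg B x.
Proof.
rewrite /sg -big_split; apply: eq_bigr => i _.
by case: (A i); case: (B i); case: (x i) => /=; ring.
Qed.

Lemma sg1 u x : sg (fun w => w == u) x = sz u x.
Proof.
rewrite /sg (bigD1 u) //= eqxx big1 ?mulr1 // => j hj.
by rewrite (negbTE hj).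
Qed.

Lemma sg_ext A B x : (forall w, A w = B w) -> sg A x = sg B x.
Proof. by move=> h; apply: eq_bigr => i _; rewrite h. Qed.

Definition pm (c : C) := c = 1 \/ c = -1.

Lemma pmM a b : pm a -> pm b -> pm (a * b).
Proof. by case=> ->; case=> ->; rewrite /pm; [left|right|right|left]; ring. Qed.

Lemma pmN a : pm a -> pm (- a).
Proof. by case=> ->; rewrite /pm; [right|left]; ring. Qed.

Lemma sg_pm A x : pm (sg A x).
Proof.
rewrite /sg; apply: (big_ind pm); first by left.
  exact: pmM.
by move=> i _; case: (A i && x i); [right|left].
Qed.

Lemma rCN (a : R) : rC (- a) = - rC a :> C.
Proof. by apply/eqP; rewrite eq_complex /= oppr0 !eqxx. Qed.

Lemma gate_sg theta u v (A : site -> bool) (c : C) (psi : state) :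
  A v = false ->
  gate theta u v (fun y => c * sg A y * psi y)
  = (fun y => c * sg A y * gate theta u v psi y).
Proof.
move=> hA; apply: functional_extensionality => y.
rewrite !gateE sg_flip hA; ring.
Qed.

Lemma gate_d1 theta u v (psi : state) : indeg v = 1%N ->
  gate (theta + pi) u v psi = (fun x => - gate theta u v psi x).
Proof.
move=> h; apply: functional_extensionality => x.
rewrite !gateE h divr1 divr1 cosDpi sinDpi !rCN; ring.
Qed.

Definition sxxflip v x : sxx v (flip v x) = - sxx v x.
Proof. by rewrite /sxx flip_eq; case: (x v) => /=; rewrite ?opprK. Qed.

Lemma sz_flip u v x : u != v -> sz u (flip v x) = sz u x.
Proof. by move=> h; rewrite /sz flip_ne. Qed.

Lemma gate_d2 theta u1 u2 v (psi : state) : indeg v = 2%N -> u1 != v -> u2 != v ->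
  gate (theta + pi) u2 v (gate (theta + pi) u1 v psi)
  = (fun x => - (sz u1 x * sz u2 x) * gate theta u2 v (gate theta u1 v psi) x).
Proof.
move=> h h1 h2; apply: functional_extensionality => x.
rewrite !gateE h mulrDl cosDpihalf sinDpihalf rCN flipK !sxxflip !sz_flip //.
set c := rC (cos _); set s := rC (sin _).
rewrite /sz /sxx; case: (x u1); case: (x u2); case: (x v); ring.
Qed.
Lemma edge_level (u v : site) : edge u v -> level v = (level u).+1.
Proof.
rewrite /edge /level => /orP [/andP [/eqP -> /eqP ->] | /andP [/eqP -> /eqP ->]].
  by rewrite addSn.
by rewrite addnS.
Qed.

Lemma edge_neq (u v : site) : edge u v -> u != v.
Proof.
move=> h; apply/negP => /eqP e; have := edge_level h; rewrite e => /eqP.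
by rewrite -[X in X == _]addn0 -addn1 eqn_add2l.
Qed.

Lemma sum_pt (P : site -> bool) (p : site) :
  (forall u, P u = (u == p)) -> (\sum_(u : site) (P u : nat) = 1)%N.
Proof.
move=> h; rewrite (bigD1 p) //= h eqxx big1 ?addn0 // => u hu.
by rewrite h (negbTE hu).
Qed.

Lemma sum_none (P : site -> bool) :
  (forall u, P u = false) -> (\sum_(u : site) (P u : nat) = 0)%N.
Proof. by move=> h; rewrite big1 // => u _; rewrite h. Qed.

Lemma nat_or (b1 b2 : bool) : ~~ (b1 && b2) -> ((b1 || b2) : nat) = (b1 + b2)%N.
Proof. by case: b1; case: b2. Qed.

Lemma pair_eqE (u p : site) : (u == p) = ((u.1 : nat) == p.1) && ((u.2 : nat) == p.2).
Proof. by case: u p => [a b] [c d]. Qed.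

Lemma sum_e1 (v : site) : (\sum_(u : site) ((((v.1 : nat) == u.1.+1) && ((v.2 : nat) == u.2)) : nat) = (0 < v.1))%N.
Proof.
case: v => [[a ha] [b hb]] /=.
case: a ha => [|a] ha /=.
  by rewrite big1.
have ha' : (a < L)%N by lia.
apply: (sum_pt (p := (Ordinal ha', Ordinal hb))) => u.
rewrite pair_eqE /=; case: u => [[c hc] [d hd]] /=.
by rewrite eqSS [b == _]eq_sym [a == _]eq_sym.
Qed.
Lemma sum_e2 (v : site) : (\sum_(u : site) ((((v.1 : nat) == u.1) && ((v.2 : nat) == u.2.+1)) : nat) = (0 < v.2))%N.
Proof.
case: v => [[a ha] [b hb]] /=.
case: b hb => [|b] hb /=.
  by rewrite big1 // => u _; rewrite andbF.
have hb' : (b < L)%N by lia.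
apply: (sum_pt (p := (Ordinal ha, Ordinal hb'))) => u.
rewrite pair_eqE /=; case: u => [[c hc] [d hd]] /=.
by rewrite eqSS [b == _]eq_sym [a == _]eq_sym.
Qed.

Lemma indegE (v : site) : indeg v = ((0 < v.1) + (0 < v.2))%N.
Proof.
rewrite /indeg -sum1_card big_mkcond /= -sum_e1 -sum_e2 -big_split /=.
apply: eq_bigr => u _; rewrite inE /edge.
rewrite -nat_or; first by case: (_ || _).
apply/negP => /andP [/andP [/eqP h1 _] /andP [/eqP h2 _]]; lia.
Qed.
Definition preds (v : site) : seq site := [seq u <- enum {: site} | edge u v].
Definition blk (v : site) : seq (site * site) := [seq (u, v) | u <- preds v].

Lemma size_preds (v : site) : size (preds v) = indeg v.
Proof.
rewrite /preds size_filter -sum1_count big_enum_cond /indeg -sum1_card.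
by apply: eq_bigl => u.
Qed.

Lemma mem_preds (v w : site) : (w \in preds v) = edge w v.
Proof. by rewrite mem_filter mem_enum andbT. Qed.

Lemma uniq_preds (v : site) : uniq (preds v).
Proof. by rewrite filter_uniq // enum_uniq. Qed.

Lemma indeg_le2 (v : site) : (indeg v <= 2)%N.
Proof. by rewrite indegE; case: (0 < _)%N; case: (0 < _)%N. Qed.

Definition Gf (theta : R) := fun (psi : state) (e : site * site) => gate theta e.1 e.2 psi.

Lemma blk_step theta (v : site) (A : site -> bool) (c : C) (psi : state) : A v = false ->
  foldl (Gf (theta + pi)) (fun y => c * sg A y * psi y) (blk v)
  = (fun y => (if indeg v == 0%N then c else - c)
        * sg (fun w => A w (+) ((indeg v == 2%N) && edge w v)) y
        * foldl (Gf theta) psi (blk v) y).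
Proof.
move=> hA.
have hs := size_preds v; have hu := uniq_preds v; have hm := mem_preds v.
rewrite /blk; case e: (preds v) hs hu => [|u1 [|u2 [|u3 s]]] /= hs hu.
- rewrite -hs /=; apply: functional_extensionality => y.
  by rewrite (@sg_ext _ A) // => w; rewrite addbF.
- rewrite -hs /=.
  have h1 : edge u1 v by rewrite -hm e mem_seq1.
  rewrite /Gf /= gate_d1 // gate_sg //.
  apply: functional_extensionality => y.
  rewrite (@sg_ext _ A); first by ring.
  by move=> w; rewrite addbF.
- rewrite -hs /=.
  have h1 : edge u1 v by rewrite -hm e inE eqxx.
  have h2 : edge u2 v by rewrite -hm e !inE eqxx orbT.
  have hne : u1 != u2 by move: hu; rewrite inE andbT.
  rewrite /Gf /= !gate_sg // gate_d2 ?edge_neq //.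
  apply: functional_extensionality => y.
  rewrite (@sg_ext (fun w => A w (+) edge w v) (fun w => A w (+) ((w == u1) (+) (w == u2)))); last first.
    move=> w; rewrite -hm e !inE; congr (_ (+) _).
    by case: (w =P u1) => [->|]; rewrite ?(negbTE hne) //.
  rewrite sgX sgX !sg1; ring.
- by have := indeg_le2 v; rewrite -hs.
Qed.
Fixpoint xs (s : seq site) (w : site) : bool :=
  if s is v :: s' then ((indeg v == 2%N) && edge w v) (+) xs s' w else false.

Lemma main_ind theta (s : seq site) (A : site -> bool) (c : C) (psi : state) :
  pairwise (fun v w : site => (level v <= level w)%N) s ->
  (forall v, v \in s -> A v = false) ->
  pm c ->
  exists c', pm c' /\
    foldl (Gf (theta + pi)) (fun y => c * sg A y * psi y) (flatten (map blk s))
    = (fun y => c' * sg (fun w => A w (+) xs s w) y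
                  * foldl (Gf theta) psi (flatten (map blk s)) y).
Proof.
elim: s A c psi => [|v s IH] A c psi /=.
  move=> _ _ hc; exists c; split => //.
  apply: functional_extensionality => y.
  by rewrite (@sg_ext (fun w => A w (+) false) A) // => w; rewrite addbF.
move=> /andP [hall hpw] hA hc.
rewrite !foldl_cat blk_step; last by apply: hA; rewrite inE eqxx.
have hc' : pm (if indeg v == 0%N then c else - c).
  by case: (_ == _) => //; apply: pmN.
have hA' : forall v', v' \in s ->
    (A v' (+) ((indeg v == 2%N) && edge v' v)) = false.
  move=> v' hv'; rewrite hA; last by rewrite inE hv' orbT.
  case he: (edge v' v); rewrite ?andbF //= andbT.
  move/allP: hall => /(_ v' hv'); rewrite (edge_level he) => hl.
  by exfalso; move: hl; rewrite ltnn.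
have [c' [hpm ->]] := IH _ _ (foldl (Gf theta) psi (blk v)) hpw hA' hc'.
exists c'; split => //.
apply: functional_extensionality => y.
by rewrite (@sg_ext (fun w => A w (+) ((indeg v == 2%N) && edge w v) (+) xs s w)
                    (fun w => A w (+) (((indeg v == 2%N) && edge w v) (+) xs s w)))
   // => w; rewrite addbA.
Qed.
Lemma test_lia (a : nat) : (1 < L)%N -> (a < L)%N -> (a.+1 < L)%N = (a != L.-1).
Proof. move=> h1 h2; apply/idP/idP; lia. Qed.

Lemma parity_inB (a b : nat) : (1 < L)%N -> (a < L)%N -> (b < L)%N ->
  odd (((a.+1 < L) && (0 < b)) + ((b.+1 < L) && (0 < a)))%N =
  [|| a == 0%N, a == L.-1, b == 0%N | b == L.-1]
  && ~~ ((a == 0%N) && (b == 0%N)) && ~~ ((a == L.-1) && (b == L.-1)).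
Proof.
move=> hL ha hb.
have -> : (a.+1 < L)%N = (a != L.-1) by apply/idP/idP; lia.
have -> : (b.+1 < L)%N = (b != L.-1) by apply/idP/idP; lia.
have -> : (0 < a)%N = (a != 0%N) by case: a {ha}.
have -> : (0 < b)%N = (b != 0%N) by case: b {hb}.
case: (a =P 0%N) => h1; case: (a =P L.-1) => h2; case: (b =P 0%N) => h3;
  case: (b =P L.-1) => h4 //=; lia.
Qed.
Lemma sum_f1 (w : site) :
  (\sum_(v : site) (((((v.1 : nat) == w.1.+1) && ((v.2 : nat) == w.2))
      && ((0 < v.1) && (0 < v.2))) : nat) = ((w.1.+1 < L) && (0 < w.2)))%N.
Proof.
case: w => [[a ha] [b hb]] /=.
case: (boolP ((a.+1 < L) && (0 < b))%N) => h.
  have ha' : (a.+1 < L)%N by case/andP: h.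
  apply: (sum_pt (p := (Ordinal ha', Ordinal hb))) => u.
  rewrite pair_eqE /=; case: u => [[c hc] [d hd]] /=.
  case: (c =P a.+1) => [->|] //=; case: (d =P b) => [->|] //=.
  by case/andP: h => _ ->.
rewrite big1 // => u _; case: u => [[c hc] [d hd]] /=.
case: (c =P a.+1) => [e|] //=; case: (d =P b) => [e'|] //=.
by subst; move: h; rewrite hc /= => /negbTE ->.
Qed.

Lemma sum_f2 (w : site) :
  (\sum_(v : site) (((((v.1 : nat) == w.1) && ((v.2 : nat) == w.2.+1))
      && ((0 < v.1) && (0 < v.2))) : nat) = ((w.2.+1 < L) && (0 < w.1)))%N.
Proof.
case: w => [[a ha] [b hb]] /=.
case: (boolP ((b.+1 < L) && (0 < a))%N) => h.
  have hb' : (b.+1 < L)%N by case/andP: h.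
  apply: (sum_pt (p := (Ordinal ha, Ordinal hb'))) => u.
  rewrite pair_eqE /=; case: u => [[c hc] [d hd]] /=.
  case: (c =P a) => [->|] //=; case: (d =P b.+1) => [->|] //=.
  by case/andP: h => _ ->.
rewrite big1 // => u _; case: u => [[c hc] [d hd]] /=.
case: (c =P a) => [e|] //=; case: (d =P b.+1) => [e'|] //=.
by subst; move: h; rewrite hd /= => /negbTE ->.
Qed.

Lemma xs_sum (s : seq site) w :
  xs s w = odd (\sum_(v <- s) (((indeg v == 2%N) && edge w v) : nat)).
Proof.
elim: s => [|v s IH] /=; first by rewrite big_nil.
by rewrite big_cons oddD IH; case: (_ && _).
Qed.

Lemma xs_sorted (hL : (1 < L)%N) (w : site) : xs (sorted_sites L) w = inB w.
Proof.
have hp : perm_eq (sorted_sites L) (enum {: site}).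
  by rewrite /sorted_sites perm_sort perm_refl.
rewrite xs_sum (perm_big _ hp) /= big_enum /=.
rewrite (eq_bigr (fun v : site => ((((((v.1 : nat) == w.1.+1) && ((v.2 : nat) == w.2))
      && ((0 < v.1) && (0 < v.2))) : nat) +
      (((((v.1 : nat) == w.1) && ((v.2 : nat) == w.2.+1))
      && ((0 < v.1) && (0 < v.2))) : nat))%N)); last first.
  move=> v _; rewrite -nat_or; last first.
    by apply/negP => /andP [/andP [/andP [/eqP h1 _] _] /andP [/andP [/eqP h2 _] _]]; lia.
  rewrite indegE /edge -andb_orl andbC; congr (nat_of_bool (_ && _)).
  by case: (0 < _)%N; case: (0 < _)%N.
rewrite big_split /= sum_f1 sum_f2.
case: w => [[a ha] [b hb]] /=.
by rewrite parity_inB.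
Qed.
Local Notation inBL := (@inB L).
Local Notation whipL := (@whip R L).
Local Notation plusL := (@plus_state R L).
Lemma whipE theta : whipL theta = foldl (Gf theta) (plusL) (flatten (map blk (sorted_sites L))).
Proof. by []. Qed.

Lemma whip_shift (hL : (1 < L)%N) theta : exists c, pm c /\
  whipL (theta + pi) = (fun y => c * sg inBL y * whipL theta y).
Proof.
have hp0 : plusL = (fun y => 1 * sg (fun _ => false) y * plusL y).
  apply: functional_extensionality => y.
  by rewrite /sg big1 ?mul1r.
have pw : pairwise (fun v w : site => (level v <= level w)%N) (sorted_sites L).
  rewrite -sorted_pairwise; last by move=> a b c; apply: leq_trans.
  by apply: sort_sorted => a b; apply: leq_total.
have [c [hc e]] := @main_ind theta (sorted_sites L) (fun _ => false) 1 plusL pw (fun _ _ => erefl) (or_introl erefl).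
exists c; split => //.
rewrite !whipE {1}hp0 e; apply: functional_extensionality => y.
by rewrite (@sg_ext _ inBL) // => w; rewrite xs_sorted.
Qed.

Lemma TopE (psi : state) : Top psi = (fun y => sg inBL y * psi y).
Proof.
apply: functional_extensionality => y.
have -> : Top psi y = (\prod_(i <- [seq i <- enum {: site} | inB i]) sz i y) * psi y.
  rewrite /Top; elim: [seq i <- enum {: site} | inB i] => [|i s IH] /=.
    by rewrite big_nil mul1r.
  by rewrite big_cons /pauliZ IH mulrA.
rewrite big_filter big_enum_cond /sg big_mkcond /=.
congr (_ * _); apply: eq_bigr => i _; rewrite /sz.
by case: (inB i); case: (y i).
Qed.

Lemma dXE (psi : state) y : dX psi y = \sum_(i <- [seq i <- enum {: site} | inB' i]) psi (flip i y).
Proof.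
rewrite /dX; elim: [seq i <- enum {: site} | inB' i] => [|i s IH] /=.
  by rewrite big_nil.
by rewrite big_cons /addop /pauliX IH.
Qed.

Lemma inB'_inB (hL : (1 < L)%N) (i : site) : inB' i -> inB i.
Proof.
rewrite /inB' /inB; case: i => [[a ha] [b hb]] /=.
move=> /orP [/andP [/eqP h1 h2]|/andP [/eqP h1 h2]];
  case: (a =P 0%N) => ?; case: (a =P L.-1) => ?; case: (b =P 0%N) => ?;
  case: (b =P L.-1) => ? //=; lia.
Qed.

Lemma dX_sg (hL : (1 < L)%N) (c : C) (psi : state) y :
  dX (fun x => c * sg inBL x * psi x) y = - (c * sg inBL y * dX psi y).
Proof.
rewrite !dXE mulr_sumr -sumrN; apply: eq_big_seq => i hi.
move: hi; rewrite mem_filter => /andP [hi _].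
rewrite sg_flip inB'_inB //; ring.
Qed.

Lemma cconj_pm (f z : C) : pm f -> cconj (f * z) = f * cconj z.
Proof.
case=> ->; first by rewrite !mul1r.
rewrite !mulN1r; case: z => a b /=.
by apply/eqP; rewrite eq_complex /= !eqxx.
Qed.

Lemma pm_sq f : pm f -> f * f = 1.
Proof. by case=> ->; ring. Qed.

Lemma expi0 : expi 0 = 1 :> C.
Proof. by apply/eqP; rewrite eq_complex /= cos0 sin0 !eqxx. Qed.

Lemma expipi : expi pi = -1 :> C.
Proof. by apply/eqP; rewrite eq_complex /= cospi sinpi oppr0 !eqxx. Qed.
Lemma final (hL : (2 <= L)%N) :
  (forall theta : R, exists phi : R,
      @whip R L (theta + pi) =
      (fun x => expi phi * @Top R L (@whip R L theta) x))
  /\ (forall psi : state,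
        @Top R L (@dX R L psi) = (fun x => - @dX R L (@Top R L psi) x))
  /\ (forall theta : R,
        expect (@dX R L) (@whip R L (theta + pi))
        = - expect (@dX R L) (@whip R L theta))
  /\ (forall (theta : R) (i j : site),
        expect (@ZZ R L i j) (@whip R L (theta + pi))
        = expect (@ZZ R L i j) (@whip R L theta)).
Proof.
have hL1 : (1 < L)%N by [].
split.
  move=> theta; have [c [hc ->]] := whip_shift hL1 theta.
  case: hc => ->.
    exists 0; apply: functional_extensionality => y.
    by rewrite TopE expi0 mulrA.
  exists pi; apply: functional_extensionality => y.
  by rewrite TopE expipi mulrA.
split.
  move=> psi; apply: functional_extensionality => y.
  have -> : Top psi = (fun x => 1 * sg inBL x * psi x).
    by rewrite TopE; apply: functional_extensionality => x; rewrite mul1r.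
  by rewrite dX_sg // opprK TopE mul1r.
split.
  move=> theta; have [c [hc ->]] := whip_shift hL1 theta.
  rewrite /expect -sumrN; apply: eq_bigr => x _.
  rewrite dX_sg // cconj_pm; last by apply: pmM => //; apply: sg_pm.
  have := pm_sq (pmM hc (sg_pm inBL x)).
  set f := c * sg inBL x => hf.
  rewrite -[RHS]mul1r -hf; ring.
move=> theta i j; have [c [hc ->]] := whip_shift hL1 theta.
rewrite /expect; apply: eq_bigr => x _.
rewrite /ZZ /pauliZ cconj_pm; last by apply: pmM => //; apply: sg_pm.
have := pm_sq (pmM hc (sg_pm inBL x)).
set f := c * sg inBL x => hf.
rewrite -[RHS]mul1r -hf; ring.
Qed.
End S.

Theorem mainTheorem11 (R : realType) (L : nat) (hL : (2 <= L)%N) :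
  (forall theta : R, exists phi : R,
      @whip R L (theta + pi) =
      (fun x => expi phi * @Top R L (@whip R L theta) x))
  /\ (forall psi : state R L,
        @Top R L (@dX R L psi) = (fun x => - @dX R L (@Top R L psi) x))
  /\ (forall theta : R,
        expect (@dX R L) (@whip R L (theta + pi))
        = - expect (@dX R L) (@whip R L theta))
  /\ (forall (theta : R) (i j : site L),
        expect (@ZZ R L i j) (@whip R L (theta + pi))
        = expect (@ZZ R L i j) (@whip R L theta)).
Proof. exact: final. Qed.
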